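(* Let $M$ be a $0/1$-matrix, let $B$ be a block of $M$, let $i$ be an entry of the input boundary $B^-$, and let $\sigma_1(i),\sigma_2(i)$ be two entries of the output boundary $B^+$ that are both reachable from $i$, with $\sigma_1(i)<\sigma_2(i)$ in the output-boundary order. If there is an entry $\sigma(j)$ of $B^+$ that is reachable from some entry $j\in B^-$ and satisfies $\sigma_1(i)<\sigma(j)<\sigma_2(i)$, then $\sigma(j)$ is also reachable from $i$.
   Context: Let $M$ be an $m\times n$ $0/1$-matrix with entries indexed $(r,s)$ (rows increasing from bottom to top, columns from left to right). A path from $(k,l)$ to $(i,j)$ is a sequence of $1$-entries starting at $(k,l)$ and ending at $(i,j)$ in which each step goes from $(r,s)$ to $(r+1,s)$, $(r,s+1)$ or $(r+1,s+1)$; $(i,j)$ is reachable from $(k,l)$ if such a path exists. A block $B$ is the submatrix formed by rows $r^-\le r\le r^+$ and columns $s^-\le s\le s^+$. Its input boundary $B^-$ consists of the entries in row $r^-$ or column $s^-$ of $B$, ordered: first row $r^-$ from column $s^+$ down to $s^-$, then the remaining entries of column $s^-$ from row $r^-+1$ up to $r^+$. Its output boundary $B^+$ consists of the entries in row $r^+$ or column $s^+$ of $B$, ordered: first column $s^+$ from row $r^-$ up to $r^+$, then the remaining entries of row $r^+$ from column $s^+-1$ down to $s^-$. *)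

(* Defs.v *)
From mathcomp Require Import all_boot all_algebra.
Set Implicit Arguments. Unset Strict Implicit. Unset Printing Implicit Defensive.

(* An entry (r, s) of an m x n matrix: r = row (increasing bottom to top),
   s = column (increasing left to right). *)
Definition entry (m n : nat) := ('I_m * 'I_n)%type.

Section Defs.
Variables (m n : nat).
Implicit Types (M : 'M[bool]_(m, n)) (x y : entry m n).

Definition one_entry M x : bool := M x.1 x.2.

Definition step x y : bool :=
  [|| ((y.1 : nat) == x.1.+1) && ((y.2 : nat) == x.2),
      ((y.1 : nat) == x.1) && ((y.2 : nat) == x.2.+1)
    | ((y.1 : nat) == x.1.+1) && ((y.2 : nat) == x.2.+1)].

Definition is_path M x (p : seq (entry m n)) y : bool :=
  [&& path step x p, all (one_entry M) (x :: p) & last x p == y].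

Definition reachable M x y : Prop := exists p, is_path M x p y.
End Defs.

Record block := Block { r_lo : nat; r_hi : nat; c_lo : nat; c_hi : nat }.

Definition valid_block (m n : nat) (B : block) : bool :=
  [&& r_lo B <= r_hi B, r_hi B < m, c_lo B <= c_hi B & c_hi B < n].

Definition in_block (m n : nat) (B : block) (x : entry m n) : bool :=
  [&& r_lo B <= x.1, x.1 <= r_hi B, c_lo B <= x.2 & x.2 <= c_hi B].

Definition in_input (m n : nat) (B : block) (x : entry m n) : bool :=
  in_block B x && (((x.1 : nat) == r_lo B) || ((x.2 : nat) == c_lo B)).

Definition in_output (m n : nat) (B : block) (x : entry m n) : bool :=
  in_block B x && (((x.1 : nat) == r_hi B) || ((x.2 : nat) == c_hi B)).

(* position in the output-boundary order: first column c_hi from row r_lo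
   up to r_hi, then row r_hi from column c_hi - 1 down to c_lo *)
Definition out_pos (m n : nat) (B : block) (x : entry m n) : nat :=
  if (x.2 : nat) == c_hi B then x.1 - r_lo B
  else (r_hi B - r_lo B) + (c_hi B - x.2).

Definition out_lt (m n : nat) (B : block) (x y : entry m n) : bool :=
  out_pos B x < out_pos B y.

(* Main.v *)
Require Import Defs.
From mathcomp Require Import all_boot all_algebra zify.
Set Implicit Arguments. Unset Strict Implicit. Unset Printing Implicit Defensive.

Section L.
Variables (m n : nat).
Implicit Types (x y z : entry m n).

Lemma step_b x y : step x y ->
  [/\ (x.1 <= y.1)%N, (y.1 <= x.1.+1)%N, (x.2 <= y.2)%N & (y.2 <= x.2.+1)%N].
Proof. rewrite /step => /or3P[] /andP[/eqP-> /eqP->]; split; lia. Qed.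

Lemma entry_eq x y : (x.1 : nat) = y.1 -> (x.2 : nat) = y.2 -> x = y.
Proof. case: x => a b; case: y => c d /= h1 h2. by rewrite (ord_inj h1) (ord_inj h2). Qed.

Lemma path_mono x0 p : path (@step m n) x0 p -> forall z, z \in p ->
  (x0.1 <= z.1)%N /\ (x0.2 <= z.2)%N.
Proof.
elim: p x0 => [|x1 p IH] x0 //= /andP[s Hp] z.
rewrite inE => /orP[/eqP->|zp].
  by case/step_b: s => *; split.
case/step_b: s => *; have [] := IH _ Hp _ zp; lia.
Qed.

Lemma seg x0 p y : path (@step m n) x0 p ->
  (exists2 u : entry m n, u \in x0 :: p & (u.1 <= y.1)%N && (y.2 <= u.2)%N) ->
  (exists2 d : entry m n, d \in x0 :: p & (y.1 <= d.1)%N && (d.2 <= y.2)%N) ->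
  y \in x0 :: p.
Proof.
elim: p x0 => [|x1 p IH] x0 /=.
  move=> _ [u]; rewrite inE => /eqP-> /andP[h1 h2] [d]; rewrite inE => /eqP-> /andP[h3 h4].
  by rewrite inE (@entry_eq y x0) //; lia.
move=> /andP[s Hp] [u Hu /andP[hu1 hu2]] [d Hd /andP[hd1 hd2]].
have mono := path_mono Hp.
have [->|ne] := eqVneq y x0; first by rewrite inE eqxx.
have ne' : (y.1 : nat) <> x0.1 \/ (y.2 : nat) <> x0.2.
  case: (eqVneq (y.1:nat) x0.1) => e1; last by left; apply/eqP.
  case: (eqVneq (y.2:nat) x0.2) => e2; last by right; apply/eqP.
  by move: ne; rewrite (entry_eq e1 e2) eqxx.
have [sa sb sc sd] := step_b s.
rewrite in_cons (negbTE ne) /=; apply: IH => //.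
- move: Hu; rewrite in_cons => /orP[/eqP Eu|Hu]; last by exists u; rewrite // hu1 hu2.
  subst u; exists x1; first by rewrite inE eqxx.
  move: Hd; rewrite in_cons => /orP[/eqP Ed|Hd].
    subst d; exfalso; case: ne'; rewrite ?andbT; try (apply/andP; split); lia.
  have [m1 m2] : (x0.1 <= d.1)%N /\ (x0.2 <= d.2)%N.
    move: Hd; rewrite in_cons => /orP[/eqP->|Hd]; first lia.
    have [] := mono _ Hd; lia.
  case: ne'; rewrite ?andbT; try (apply/andP; split); lia.
- move: Hd; rewrite in_cons => /orP[/eqP Ed|Hd]; last by exists d; rewrite // hd1 hd2.
  subst d; exists x1; first by rewrite inE eqxx.
  move: Hu; rewrite in_cons => /orP[/eqP Eu|Hu].
    subst u; exfalso; case: ne'; rewrite ?andbT; try (apply/andP; split); lia.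
  have [m1 m2] : (x0.1 <= u.1)%N /\ (x0.2 <= u.2)%N.
    move: Hu; rewrite in_cons => /orP[/eqP->|Hu]; first lia.
    have [] := mono _ Hu; lia.
  case: ne'; rewrite ?andbT; try (apply/andP; split); lia.
Qed.

Lemma mono2 x0 p z : path (@step m n) x0 p -> z \in x0 :: p ->
  (x0.1 <= z.1)%N /\ (x0.2 <= z.2)%N.
Proof.
move=> Hp; rewrite in_cons => /orP[/eqP->|zp]; first by split.
exact: path_mono Hp _ zp.
Qed.

Lemma rowB x0 p (R C : nat) : path (@step m n) x0 p ->
  (exists2 w : entry m n, w \in x0 :: p & (R <= w.1)%N) ->
  (forall z : entry m n, z \in x0 :: p -> (z.1 < R)%N -> (z.2 < C)%N) ->
  ((R <= x0.1)%N -> (x0.2 <= C)%N) ->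
  exists2 f : entry m n, f \in x0 :: p & (R <= f.1)%N && (f.2 <= C)%N.
Proof.
elim: p x0 => [|x1 p IH] x0 /=.
  move=> _ [w]; rewrite inE => /eqP-> h _ h3.
  by exists x0; rewrite ?inE ?eqxx // h h3.
move=> /andP[s Hp] [w Hw hw] H2 H3.
case: (leqP R x0.1) => hx0.
  by exists x0; rewrite ?in_cons ?eqxx // hx0 H3.
have c0 := H2 x0 (mem_head _ _) hx0.
have [sa sb sc sd] := step_b s.
have [f Hf Hf'] : exists2 f : entry m n, f \in x1 :: p & (R <= f.1)%N && (f.2 <= C)%N.
  apply: IH => //.
  - move: Hw; rewrite in_cons => /orP[/eqP Ew|Hw]; last by exists w.
    by subst w; exfalso; lia.
  - by move=> z Hz; apply: H2; rewrite in_cons Hz orbT.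
  - move=> h; lia.
by exists f => //; rewrite in_cons Hf orbT.
Qed.

Lemma colB x0 p (R C : nat) : path (@step m n) x0 p ->
  (exists2 w : entry m n, w \in x0 :: p & (C <= w.2)%N) ->
  (forall z : entry m n, z \in x0 :: p -> (z.2 < C)%N -> (z.1 < R)%N) ->
  ((C <= x0.2)%N -> (x0.1 <= R)%N) ->
  exists2 f : entry m n, f \in x0 :: p & (C <= f.2)%N && (f.1 <= R)%N.
Proof.
elim: p x0 => [|x1 p IH] x0 /=.
  move=> _ [w]; rewrite inE => /eqP-> h _ h3.
  by exists x0; rewrite ?inE ?eqxx // h h3.
move=> /andP[s Hp] [w Hw hw] H2 H3.
case: (leqP C x0.2) => hx0.
  by exists x0; rewrite ?in_cons ?eqxx // hx0 H3.
have c0 := H2 x0 (mem_head _ _) hx0.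
have [sa sb sc sd] := step_b s.
have [f Hf Hf'] : exists2 f : entry m n, f \in x1 :: p & (C <= f.2)%N && (f.1 <= R)%N.
  apply: IH => //.
  - move: Hw; rewrite in_cons => /orP[/eqP Ew|Hw]; last by exists w.
    by subst w; exfalso; lia.
  - by move=> z Hz; apply: H2; rewrite in_cons Hz orbT.
  - move=> h; lia.
by exists f => //; rewrite in_cons Hf orbT.
Qed.

Variable M : 'M[bool]_(m, n).

Lemma reach_snoc a b c : reachable M a b -> step b c -> one_entry M c -> reachable M a c.
Proof.
case=> q /and3P[Hp Ha /eqP Hl] s oc; exists (rcons q c).
rewrite /is_path rcons_path Hp Hl s last_rcons eqxx /=.
by move: Ha => /= /andP[o1 o2]; rewrite o1 all_rcons oc o2.
Qed.

Lemma reach_cons a b c : step a b -> one_entry M a -> reachable M b c -> reachable M a c.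
Proof.
move=> s oa [q /and3P[Hp Ha Hl]]; exists (b :: q).
by move: Ha => /= /andP[o1 o2]; rewrite /is_path /= s Hp oa o1 o2 Hl.
Qed.

Lemma reach_pref x0 p t z : is_path M x0 p t -> z \in x0 :: p -> reachable M x0 z.
Proof.
case/and3P=> Hp Ha _; elim: p x0 Hp Ha => [|x1 p IH] x0 /=.
  move=> _ /andP[o _]; rewrite inE => /eqP->; exists [::]; by rewrite /is_path /= o eqxx.
move=> /andP[s Hp] /andP[o Ha]; rewrite in_cons => /orP[/eqP->|Hz].
  by exists [::]; rewrite /is_path /= o eqxx.
exact: reach_cons s o (IH _ Hp Ha Hz).
Qed.

Lemma lemC (Bet : pred (entry m n)) a t q0 qs : is_path M q0 qs t -> Bet t ->
  (Bet q0 -> reachable M a q0) ->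
  (forall x y, step x y -> ~~ Bet x -> Bet y -> one_entry M y -> reachable M a y) ->
  reachable M a t.
Proof.
case/and3P=> Hp Ha /eqP Hl; subst t.
elim: qs q0 Hp Ha => [|q1 qs IH] q0 /=; first by move=> _ _ Bt H0 H; apply: H0.
move=> /andP[s Hp] /and3P[o0 o1 Ha] Bt H0 H; apply: IH => //=.
- by rewrite o1.
- move=> B1; case: (boolP (Bet q0)) => B0.
    exact: reach_snoc (H0 B0) s o1.
  exact: H s B0 B1 o1.
Qed.

Lemma hasE (a : pred (entry m n)) s : has a s -> exists2 u : entry m n, u \in s & a u.
Proof. by move/hasP. Qed.
Lemma hasI (a : pred (entry m n)) s (u : entry m n) : u \in s -> a u -> has a s.
Proof. by move=> h1 h2; apply/hasP; exists u. Qed.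
Lemma hasNE (a : pred (entry m n)) s : ~~ has a s -> forall u : entry m n, u \in s -> ~~ a u.
Proof. by move/hasPn. Qed.
End L.

Lemma out_le m n B (x y : entry m n) : in_output B x -> in_output B y -> out_lt B x y ->
  (x.1 <= y.1)%N /\ (y.2 <= x.2)%N.
Proof.
rewrite /in_output /in_block /out_lt /out_pos.
case/andP=> /and4P[a b c d] e; case/andP=> /and4P[a' b' c' d'] e'.
case: eqP => h1; case: eqP => h2.
all: move: e e' => /orP[] /eqP e /orP[] /eqP e' h; lia.
Qed.

Theorem corollary1 (m n : nat) (M : 'M[bool]_(m, n)) (B : block)
  (hB : valid_block m n B) (i s1 s2 j sj : entry m n) :
  in_input B i -> in_output B s1 -> in_output B s2 ->
  reachable M i s1 -> reachable M i s2 -> out_lt B s1 s2 ->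
  in_input B j -> in_output B sj -> reachable M j sj ->
  out_lt B s1 sj -> out_lt B sj s2 ->
  reachable M i sj.
Proof.
move=> hi ho1 ho2 [p1 P1] [p2 P2] l12 hj hoj [q Q] l1j lj2.
have [a1 a2] := out_le ho1 hoj l1j.
have [b1 b2] := out_le hoj ho2 lj2.
case/and3P: (P1) => Pp1 _ /eqP L1.
case/and3P: (P2) => Pp2 _ /eqP L2.
pose U1 := fun y : entry m n => has (fun u : entry m n => (u.1 <= y.1)%N && (y.2 <= u.2)%N) (i :: p1).
pose D1 := fun y : entry m n => has (fun u : entry m n => (y.1 <= u.1)%N && (u.2 <= y.2)%N) (i :: p1).
pose U2 := fun y : entry m n => has (fun u : entry m n => (u.1 <= y.1)%N && (y.2 <= u.2)%N) (i :: p2).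
pose D2 := fun y : entry m n => has (fun u : entry m n => (y.1 <= u.1)%N && (u.2 <= y.2)%N) (i :: p2).
pose Bet := fun y : entry m n => U1 y && D2 y.

have F0 : forall y, Bet y -> (i.1 <= y.1)%N /\ (i.2 <= y.2)%N.
  move=> y /andP[/hasE [u Hu /andP[u1 u2]] /hasE [d Hd /andP[d1 d2]]].
   have [] := mono2 Pp1 Hu; have [] := mono2 Pp2 Hd;  clear -u1 u2 d1 d2. lia.

have S1 : forall y, U1 y -> D1 y -> reachable M i y.
  move=> y /hasE [u Hu Hu'] /hasE [d Hd Hd'].
  apply: reach_pref P1 _; apply: seg Pp1 _ _; [by exists u | by exists d].
have S2 : forall y, U2 y -> D2 y -> reachable M i y.
  move=> y /hasE [u Hu Hu'] /hasE [d Hd Hd'].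
  apply: reach_pref P2 _; apply: seg Pp2 _ _; [by exists u | by exists d].
have s1in : s1 \in i :: p1 by rewrite -L1 mem_last.
have s2in : s2 \in i :: p2 by rewrite -L2 mem_last.
apply: (@lemC _ _ M Bet i sj j q Q).
- by apply/andP; split; [apply: (hasI s1in) | apply: (hasI s2in)]; rewrite /= ?a1 ?a2 ?b1 ?b2.
- move=> Bj; have [f1 f2] := F0 _ Bj; move: Bj => /andP[Uj Dj].
  move: hi hj; rewrite /in_input /in_block.
  case/andP=> /and4P[i1 i2 i3 i4] _; case/andP=> /and4P[j1 j2 j3 j4] /orP[] /eqP e.
    apply: S1 => //; apply: (hasI (mem_head _ _)) => /=; apply/andP; split;
      clear -e i1 i3 f1 f2; lia.
  apply: S2 => //; apply: (hasI (mem_head _ _)) => /=; apply/andP; split;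
    clear -e i1 i3 f1 f2; lia.
- move=> x y s; have [sa sb sc sd] := step_b s.
  rewrite negb_and => /orP[] nB By _; have [f1 f2] := F0 _ By; move: By => /andP[Uy Dy].
  + apply: S1 => //.
    have nU := hasNE nB.
    have [w Hw /andP[w1 w2]] := hasE Uy.
    have [f Hf Hf'] : exists2 f : entry m n, f \in i :: p1 & (y.1 <= f.1)%N && (f.2 <= y.2)%N.
    apply: (@rowB _ _ i p1 y.1 y.2 Pp1).
    * exists w => //.
      case: (leqP w.1 x.1) => hw; last by clear -hw sb; lia.
      have := nU _ Hw; rewrite /= hw /=; clear -w2 sc => /negP; case; lia.
    * move=> z Hz hz; have := nU _ Hz; rewrite /=.
      have -> : (z.1 <= x.1)%N by clear -hz sb; lia.
      rewrite /= -ltnNge => h; clear -h sc; lia.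
    * by move=> _.
    by apply: (hasI Hf).
  + apply: S2 => //.
    have nD := hasNE nB.
    have [w Hw /andP[w1 w2]] := hasE Dy.
    have [f Hf Hf'] : exists2 f : entry m n, f \in i :: p2 & (y.2 <= f.2)%N && (f.1 <= y.1)%N.
    apply: (@colB _ _ i p2 y.1 y.2 Pp2).
    * exists w => //.
      case: (leqP w.2 x.2) => hw; last by clear -hw sd; lia.
      have := nD _ Hw; rewrite /= hw andbT; clear -w1 sa => /negP; case; lia.
    * move=> z Hz hz; have := nD _ Hz; rewrite /=.
      have -> : (z.2 <= x.2)%N by clear -hz sd; lia.
      rewrite andbT -ltnNge => h; clear -h sa; lia.
    * by move=> _.
    apply: (hasI Hf); move: Hf' => /andP[h1 h2]; by rewrite /= h1 h2.
Qed.
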